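(* Let $n \geq 12$ and let $\Gamma_n$ be the group with presentation $$\Gamma_n = \langle s, x \mid [s^n, x] = 1,\ [x, s^i x s^{-i}] = 1 \text{ for } 1 \leq i \leq n-1 \rangle.$$ Let $S_1 = \{s, x\}$, $S_2 = \{s^{-1}, x\}$, $S_3 = \{s, x^{-1}\}$, $S_4 = \{s^{-1}, x^{-1}\}$. Then there exist elements $f_1, f_2, f_3, f_4, g_1, g_2, g_3, g_4 \in \Gamma_n$ such that: (i) $\langle f_1, f_2, f_3, f_4 \rangle \cong \langle g_1, g_2, g_3, g_4 \rangle \cong \mathbb{Z}^4$; (ii) each of $f_1, f_2, f_3, f_4$ can be represented by a positive word in the alphabet $S_1$; (iii) for every $1 \leq i \leq 4$, the element $g_i$ can be represented by a positive word in the alphabet $S_i$.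
   Context: $[a,b]$ denotes the commutator of $a$ and $b$. Let $G$ be a group and $S \subseteq G \setminus \{1\}$ a subset such that $x \in S$ implies $x^{-1} \notin S$. A non-trivial reduced word $W = y_1^{m_1} \cdots y_k^{m_k}$ is a positive word in the alphabet $S$ if $y_1, \dots, y_k \in S$ and all exponents $m_1, \dots, m_k$ are positive integers. An element is represented by such a word if it equals the product in $G$. *)

(* Defs.v *)
(* The group Gamma_n is built honestly from its presentation:
   elements are words in s^{+-1}, x^{+-1}, modulo the congruence generated by
   free cancellation and the defining relators. *)
From mathcomp Require Import all_boot all_algebra.
Set Implicit Arguments. Unset Strict Implicit. Unset Printing Implicit Defensive.
Import GRing.Theory.

(* A letter (gen, inv): gen = false is s, gen = true is x; inv = true means inverse. *)
Definition letter := (bool * bool)%type.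
Definition word := seq letter.

Definition ls  : letter := (false, false).
Definition lsi : letter := (false, true).
Definition lx  : letter := (true, false).
Definition lxi : letter := (true, true).

Definition linv (l : letter) : letter := (l.1, ~~ l.2).
Definition winv (w : word) : word := rev (map linv w).
Definition wpow (w : word) (k : nat) : word := flatten (nseq k w).

Definition wcomm (a b : word) : word := winv a ++ winv b ++ a ++ b.

Definition relators (n : nat) : seq word :=
  wcomm (wpow [:: ls] n) [:: lx]
  :: [seq wcomm [:: lx] (wpow [:: ls] i ++ [:: lx] ++ wpow [:: lsi] i) | i <- iota 1 n.-1].

Inductive gamma_eq (n : nat) : word -> word -> Prop :=
  | ge_refl w : gamma_eq n w w
  | ge_sym u v : gamma_eq n u v -> gamma_eq n v u
  | ge_trans u v w : gamma_eq n u v -> gamma_eq n v w -> gamma_eq n u w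
  | ge_free u v l : gamma_eq n (u ++ [:: l; linv l] ++ v) (u ++ v)
  | ge_rel u v r : r \in relators n -> gamma_eq n (u ++ r ++ v) (u ++ v).

Inductive gen_word (fs : seq word) : word -> Prop :=
  | gw_nil : gen_word fs [::]
  | gw_pos f w : f \in fs -> gen_word fs w -> gen_word fs (f ++ w)
  | gw_neg f w : f \in fs -> gen_word fs w -> gen_word fs (winv f ++ w).

Definition in_subgroup (n : nat) (fs : seq word) (g : word) : Prop :=
  exists w, gen_word fs w /\ gamma_eq n g w.

Definition Z4 := {ffun 'I_4 -> int}.

Definition subgroup_iso_Z4 (n : nat) (fs : seq word) : Prop :=
  exists phi : Z4 -> word,
    (forall a b : Z4, gamma_eq n (phi (a + b)%R) (phi a ++ phi b)) /\
    (forall a b : Z4, gamma_eq n (phi a) (phi b) -> a = b) /\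
    (forall g, in_subgroup n fs g <-> exists a, gamma_eq n g (phi a)).

(* g is represented by a positive word y_1^{m_1} ... y_k^{m_k} in the alphabet S:
   k >= 1, y_i in S, m_i > 0, reduced (consecutive y_i distinct) *)
Definition positive_rep (n : nat) (S : seq letter) (g : word) : Prop :=
  exists W : seq (letter * nat),
    W != [::] /\
    all (fun p => (p.1 \in S) && (0 < p.2)%N) W /\
    sorted (fun p q => p.1 != q.1) W /\
    gamma_eq n (flatten [seq wpow [:: p.1] p.2 | p <- W]) g.

Definition S1 : seq letter := [:: ls; lx].
Definition S2 : seq letter := [:: lsi; lx].
Definition S3 : seq letter := [:: ls; lxi].
Definition S4 : seq letter := [:: lsi; lxi].

(* Main.v *)
Require Import Defs.
From mathcomp Require Import all_boot all_algebra zify.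
Import GRing.Theory.
Set Implicit Arguments. Unset Strict Implicit.

Lemma ge_cong n p u v q : gamma_eq n u v -> gamma_eq n (p ++ u ++ q) (p ++ v ++ q).
Proof.
elim=> {u v}.
- by move=> w; apply: ge_refl.
- by move=> u v _ IH; apply: ge_sym.
- by move=> u v w _ IH1 _ IH2; apply: ge_trans IH2.
- by move=> u v l; have := ge_free n (p ++ u) (v ++ q) l; rewrite !catA.
- by move=> u v r Hr; have := ge_rel (p ++ u) (v ++ q) Hr; rewrite !catA.
Qed.

Lemma ge_catl n p u v : gamma_eq n u v -> gamma_eq n (p ++ u) (p ++ v).
Proof. by move=> H; have := ge_cong p [::] H; rewrite !cats0. Qed.
Lemma ge_catr n q u v : gamma_eq n u v -> gamma_eq n (u ++ q) (v ++ q).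
Proof. by move=> H; have := ge_cong [::] q H. Qed.
Lemma ge_cat n u u' v v' : gamma_eq n u u' -> gamma_eq n v v' -> gamma_eq n (u ++ v) (u' ++ v').
Proof. move=> H1 H2; apply: ge_trans (ge_catr _ H1) (ge_catl _ H2). Qed.

Lemma linvK l : linv (linv l) = l.
Proof. by case: l => a b; rewrite /linv /= negbK. Qed.
Lemma winvK w : winv (winv w) = w.
Proof. by rewrite /winv map_rev revK -map_comp (eq_map linvK) map_id. Qed.
Lemma winv_cat u v : winv (u ++ v) = winv v ++ winv u.
Proof. by rewrite /winv map_cat rev_cat. Qed.
Lemma winv_cons l w : winv (l :: w) = winv w ++ [:: linv l].
Proof. by rewrite /winv /= rev_cons -cats1. Qed.

Lemma ge_cancel n w : gamma_eq n (w ++ winv w) [::].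
Proof.
elim: w => [|l w IH] /=; first exact: ge_refl.
rewrite winv_cons.
have -> : l :: w ++ winv w ++ [:: linv l] = [:: l] ++ (w ++ winv w) ++ [:: linv l] by rewrite catA.
apply: ge_trans (ge_cong _ _ IH) _ => /=.
by have := @ge_free n [::] [::] l.
Qed.

Lemma ge_cancel' n w : gamma_eq n (winv w ++ w) [::].
Proof. by have := ge_cancel n (winv w); rewrite winvK. Qed.

Lemma ge_winv n u v : gamma_eq n u v -> gamma_eq n (winv u) (winv v).
Proof.
move=> H.
apply: (@ge_trans _ _ (winv u ++ v ++ winv v)).
  by apply: ge_sym; have := ge_cong (winv u) [::] (ge_cancel n v); rewrite !cats0.
apply: (@ge_trans _ _ (winv u ++ u ++ winv v)).
  by apply: ge_cong; apply: ge_sym.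
by rewrite catA; have := ge_cong [::] (winv v) (ge_cancel' n u).
Qed.

Definition commw n a b := gamma_eq n (a ++ b) (b ++ a).

Lemma ge_rel0 n r : r \in relators n -> gamma_eq n r [::].
Proof. by move=> H; have := @ge_rel n [::] [::] r H; rewrite cats0. Qed.

Lemma commw_rel n a b : gamma_eq n (wcomm a b) [::] -> commw n a b.
Proof.
move=> H; rewrite /commw.
apply: (@ge_trans _ _ ((b ++ a) ++ wcomm a b)); last first.
  by have := ge_catl (b ++ a) H; rewrite cats0.
rewrite /wcomm.
have -> : (b ++ a) ++ winv a ++ winv b ++ a ++ b = ((b ++ a) ++ winv (b ++ a)) ++ (a ++ b)
  by rewrite winv_cat !catA.
apply: ge_sym; exact: (ge_catr (a ++ b) (ge_cancel n (b ++ a))).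
Qed.

Lemma commw_sym n a b : commw n a b -> commw n b a.
Proof. exact: ge_sym. Qed.
Lemma commw_nil n a : commw n a [::].
Proof. by rewrite /commw cats0; apply: ge_refl. Qed.
Lemma commw_cat n a b c : commw n a b -> commw n a c -> commw n a (b ++ c).
Proof.
move=> H1 H2; rewrite /commw.
apply: (@ge_trans _ _ (b ++ a ++ c)); first by rewrite !catA; apply: ge_catr.
by rewrite -catA; apply: ge_catl.
Qed.
Lemma commw_inv n a b : commw n a b -> commw n a (winv b).
Proof.
move=> H; rewrite /commw.
apply: (@ge_trans _ _ ((winv b ++ b) ++ a ++ winv b)).
  by apply: ge_sym; have := ge_catr (a ++ winv b) (ge_cancel' n b).
apply: (@ge_trans _ _ (winv b ++ (a ++ b) ++ winv b)).
  by rewrite !catA; apply: ge_catr; rewrite -!catA; apply: ge_catl; apply: ge_sym.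
have := ge_catl (winv b ++ a) (ge_cancel n b); rewrite !cats0 !catA; exact.
Qed.
Lemma commw_wpow n a b k : commw n a b -> commw n a (wpow b k).
Proof.
move=> H; elim: k => [|k IH]; first exact: commw_nil.
exact: commw_cat.
Qed.

Definition zpow (w : word) (z : int) : word :=
  match z with Posz k => wpow w k | Negz k => wpow (winv w) k.+1 end.

Lemma commw_zpow n a b z : commw n a b -> commw n a (zpow b z).
Proof. by case: z => k H /=; apply: commw_wpow => //; apply: commw_inv. Qed.

Lemma commw_zpow2 n a b z1 z2 : commw n a b -> commw n (zpow a z1) (zpow b z2).
Proof. by move=> H; apply: commw_zpow; apply: commw_sym; apply: commw_zpow; apply: commw_sym. Qed.

Lemma wpowSr w k : wpow w k.+1 = wpow w k ++ w.
Proof. elim: k => [|k IH]; first by rewrite /wpow /= cats0. by rewrite /wpow /= in IH *; rewrite -catA -IH. Qed.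

Lemma wpow1 w : wpow w 1 = w.
Proof. by rewrite /wpow /= cats0. Qed.

Lemma zpowS n w z : gamma_eq n (zpow w (z + 1)) (zpow w z ++ w).
Proof.
case: z => [k|[|k]].
- have -> : (Posz k + 1 = Posz k.+1)%R by lia.
  by rewrite /= wpowSr; apply: ge_refl.
- have -> : (Negz 0 + 1 = Posz 0)%R by [].
  by rewrite /= /wpow /= cats0; apply: ge_sym; apply: ge_cancel'.
- have -> : (Negz k.+1 + 1 = Negz k)%R by rewrite !NegzE; lia.
  rewrite /= [wpow _ k.+2]wpowSr /= -catA.
  apply: ge_sym.
  have := ge_catl (winv w ++ wpow (winv w) k) (ge_cancel' n w); rewrite cats0; exact.
Qed.

Lemma zpowP n w z : gamma_eq n (zpow w (z - 1)) (zpow w z ++ winv w).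
Proof.
have := ge_catr (winv w) (zpowS n w (z - 1)); rewrite subrK => H.
apply: ge_trans _ (ge_sym H); apply: ge_sym.
by have := ge_catl (zpow w (z - 1)) (ge_cancel n w); rewrite cats0 catA.
Qed.

Lemma zpowD n w z1 z2 : gamma_eq n (zpow w (z1 + z2)) (zpow w z1 ++ zpow w z2).
Proof.
case: z2 => [k|k].
- elim: k => [|k IH]; first by rewrite addr0 cats0; apply: ge_refl.
  have -> : (z1 + Posz k.+1 = (z1 + Posz k) + 1)%R by lia.
  apply: ge_trans (zpowS _ _ _) _.
  rewrite [zpow w (Posz k.+1)]/= wpowSr catA; exact: ge_catr IH.
- elim: k => [|k IH].
    have -> : (z1 + Negz 0 = z1 - 1)%R by [].
    by rewrite [zpow w (Negz 0)]/= wpow1; apply: zpowP.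
  have -> : (z1 + Negz k.+1 = (z1 + Negz k) - 1)%R by rewrite !NegzE; lia.
  apply: ge_trans (zpowP _ _ _) _.
  rewrite [zpow w (Negz k.+1)]/= [wpow _ k.+2]wpowSr catA; exact: ge_catr IH.
Qed.

Definition sgl (l : letter) : int := if l.2 then (-1)%R else 1%R.
Fixpoint tw (w : word) : int :=
  if w is l :: w' then ((if l.1 then 0 else sgl l) + tw w')%R else 0%R.
Fixpoint cnt (n : nat) (j off : int) (w : word) : int :=
  if w is l :: w' then
    if l.1 then ((if (off %% n)%Z == (j %% n)%Z then sgl l else 0) + cnt n j off w')%R
    else cnt n j (off + sgl l)%R w'
  else 0%R.

Open Scope ring_scope.

Lemma tw_cat u v : tw (u ++ v) = tw u + tw v.
Proof. by elim: u => [|l u IH] /=; rewrite ?add0r // IH addrA. Qed.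

Lemma cnt_cat n j u v off : cnt n j off (u ++ v) = cnt n j off u + cnt n j (off + tw u) v.
Proof.
elim: u off => [|l u IH] off /=; first by rewrite add0r addr0.
case: l.1; first by rewrite IH add0r addrA.
by rewrite IH addrA.
Qed.

Lemma tw_winv w : tw (winv w) = - tw w.
Proof.
elim: w => [|l w IH] //=; rewrite winv_cons tw_cat IH /=.
by case: l => [[] []]; rewrite /sgl /linv /=; lia.
Qed.

Lemma cnt_winv n j w off : cnt n j off (winv w) = - cnt n j (off - tw w) w.
Proof.
elim: w off => [|l w IH] off //=; rewrite winv_cons cnt_cat IH tw_winv /=.
case: l => [[] []]; rewrite /sgl /linv /= ?add0r.
- by case: ifP => _; lia.
- by case: ifP => _; lia.
- by rewrite addr0; have -> : off - (-1 + tw w) - 1 = off - tw w by lia.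
- by rewrite addr0; have -> : off - (1 + tw w) + 1 = off - tw w by lia.
Qed.

Lemma cnt_shift n j w (off : int) : cnt n j (off + n) w = cnt n j off w.
Proof.
elim: w off => [|l w IH] off //=.
case: l.1; first by rewrite IH modzDr.
by rewrite addrAC IH.
Qed.

Lemma cnt_shiftN n j w (off : int) : cnt n j (off - Posz n) w = cnt n j off w.
Proof. by rewrite -[in RHS](subrK (Posz n) off) cnt_shift. Qed.

Lemma modz_subn (off : int) n : modz (off - Posz n) n = modz off n.
Proof. by rewrite -[in RHS](subrK (Posz n) off) modzDr. Qed.

Lemma tw_wcomm a b : tw (wcomm a b) = 0.
Proof. by rewrite /wcomm !tw_cat !tw_winv; lia. Qed.

Lemma cnt_wcomm n j a b off : cnt n j off (wcomm a b) =
  - cnt n j (off - tw a) a - cnt n j (off - tw a - tw b) b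
  + cnt n j (off - tw a - tw b) a + cnt n j (off - tw b) b.
Proof.
rewrite /wcomm !cnt_cat !cnt_winv !tw_winv.
have -> : off - tw a - tw b + tw a = off - tw b by lia.
by rewrite !addrA.

Qed.

Lemma wpow1l l k : wpow [:: l] k = nseq k l.
Proof. by rewrite /wpow; elim: k => //= k ->. Qed.

Lemma tw_nseq l k : ~~ l.1 -> tw (nseq k l) = (k%:Z * sgl l).
Proof. move=> H; elim: k => [|k IH] /=; first by rewrite mul0r. by rewrite (negbTE H) IH; lia. Qed.

Lemma cnt_nseq n j l k off : ~~ l.1 -> cnt n j off (nseq k l) = 0.
Proof. move=> H; elim: k off => [|k IH] off //=; by rewrite (negbTE H) IH. Qed.

Definition xw (i : nat) : word := nseq i ls ++ [:: lx] ++ nseq i lsi.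

Lemma tw_xw i : tw (xw i) = 0.
Proof. rewrite /xw !tw_cat !tw_nseq //= /sgl /=; lia. Qed.

Lemma relators_inv n r : r \in relators n -> tw r = 0 /\ forall j off, cnt n j off r = 0.
Proof.
rewrite /relators inE => /orP [/eqP -> | /mapP [i _ ->]]; split; rewrite ?tw_wcomm // => j off.
- rewrite cnt_wcomm !wpow1l tw_nseq // !cnt_nseq //= /sgl /=.
  rewrite mulr1 !addr0.
  rewrite modz_subn; case: ifP => _; lia.
- rewrite cnt_wcomm !wpow1l.
  have -> : nseq i ls ++ [:: lx] ++ nseq i lsi = xw i by [].
  rewrite tw_xw /= !subr0; lia.
Qed.

Lemma inv_mid n r u v : tw r = 0 -> (forall j off, cnt n j off r = 0) ->
  tw (u ++ r ++ v) = tw (u ++ v) /\ forall j off, cnt n j off (u ++ r ++ v) = cnt n j off (u ++ v).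
Proof.
move=> H1 H2; split; first by rewrite !tw_cat H1 add0r.
by move=> j off; rewrite !cnt_cat H1 H2 add0r addr0.
Qed.

Lemma ge_inv n u v : gamma_eq n u v -> tw u = tw v /\ forall j off, cnt n j off u = cnt n j off v.
Proof.
elim=> {u v}.
- by [].
- by move=> u v _ [H1 H2]; split => // j off; rewrite H2.
- by move=> u v w _ [H1 H2] _ [H3 H4]; split; [rewrite H1 | move=> j off; rewrite H2].
- move=> u v l; apply: inv_mid.
  + by case: l => [[] []].
  + move=> j off; case: l => [[] []] /=; rewrite ?addr0 //; by case: ifP.
- move=> u v r /relators_inv [H1 H2]; exact: inv_mid.
Qed.

Lemma wpow0 w : wpow w 0 = [::].
Proof. by []. Qed.
Lemma wpowS w k : wpow w k.+1 = w ++ wpow w k.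
Proof. by []. Qed.

Lemma tw_wpow w k : tw (wpow w k) = k%:Z * tw w.
Proof. elim: k => [|k IH]; first by rewrite mul0r. by rewrite wpowS tw_cat IH intS mulrDl mul1r. Qed.

Lemma tw_zpow w z : tw (zpow w z) = z * tw w.
Proof. case: z => k /=; rewrite tw_wpow // tw_winv NegzE mulrN mulNr //. Qed.

Lemma cnt_wpow n j w k off : tw w = 0 -> cnt n j off (wpow w k) = k%:Z * cnt n j off w.
Proof.
move=> H; elim: k => [|k IH]; first by rewrite mul0r.
by rewrite wpowS cnt_cat H addr0 IH intS mulrDl mul1r.
Qed.

Lemma cnt_zpow n j w z off : tw w = 0 -> cnt n j off (zpow w z) = z * cnt n j off w.
Proof.
case: z => k H /=; rewrite cnt_wpow //; last by rewrite tw_winv H oppr0.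
by rewrite cnt_winv H subr0 NegzE mulrN mulNr.
Qed.

Lemma cnt_zpow0 n j w z off : (forall off, cnt n j off w = 0) -> cnt n j off (zpow w z) = 0.
Proof.
move=> H.
have Hp : forall v, (forall off, cnt n j off v = 0) -> forall k off, cnt n j off (wpow v k) = 0.
  by move=> v Hv; elim=> [|k IH] off' //; rewrite wpowS cnt_cat Hv IH.
case: z => k /=; first exact: Hp.
by apply: Hp => off'; rewrite cnt_winv H oppr0.
Qed.

Definition y4 n : word := nseq n ls.

Definition o0 : 'I_4 := @Ordinal 4 0 isT.
Definition o1 : 'I_4 := @Ordinal 4 1 isT.
Definition o2 : 'I_4 := @Ordinal 4 2 isT.
Definition o3 : 'I_4 := @Ordinal 4 3 isT.

Definition phi n (a : Z4) : word :=
  zpow (xw 0) (a o0) ++ zpow (xw 1) (a o1) ++ zpow (xw 2) (a o2) ++ zpow (y4 n) (a o3).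

Lemma cnt_xw n (j i : nat) : cnt n j 0 (xw i) = if (Posz i %% n)%Z == (Posz j %% n)%Z then 1 else 0.
Proof.
rewrite /xw !cnt_cat !cnt_nseq // tw_nseq //= /sgl /= mulr1 add0r !addr0. done.
Qed.

Lemma cnt_phi n (j : nat) a : (2 < n)%N -> (j <= 2)%N ->
  cnt n j 0 (phi n a) = a o0 * (j == 0%N)%:R + a o1 * (j == 1%N)%:R + a o2 * (j == 2%N)%:R.
Proof.
move=> Hn Hj.
rewrite /phi !cnt_cat !tw_zpow !tw_xw !mulr0 !addr0.
rewrite (@cnt_zpow0 _ _ (y4 n)); last by move=> off; rewrite /y4 cnt_nseq.
rewrite !cnt_zpow ?tw_xw // addr0.
rewrite !cnt_xw !modz_nat !modn_small //; try lia.
by rewrite !addrA; case: j Hj => [|[|[|]]].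
Qed.

Lemma tw_y4 n : tw (y4 n) = Posz n.
Proof. by rewrite /y4 tw_nseq // /sgl /= mulr1. Qed.

Lemma tw_phi n a : tw (phi n a) = a o3 * Posz n.
Proof. by rewrite /phi !tw_cat !tw_zpow !tw_xw tw_y4 !mulr0 !add0r. Qed.

Lemma phi_inj n a b : (2 < n)%N -> gamma_eq n (phi n a) (phi n b) -> a = b.
Proof.
move=> Hn /ge_inv [Ht Hc].
have H0 := Hc (Posz 0%N) 0; have H1 := Hc (Posz 1%N) 0; have H2 := Hc (Posz 2%N) 0.
rewrite !cnt_phi //= !mulr1 !mulr0 ?addr0 ?add0r in H0 H1 H2.
rewrite !tw_phi in Ht.
have H3 : a o3 = b o3.
  apply: (@mulIf _ (Posz n)) => //; rewrite eqz_nat; lia.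
apply/ffunP => -[[|[|[|[|k]]]] Hk] //.
- by have -> : Ordinal Hk = o0 by apply: val_inj.
- by have -> : Ordinal Hk = o1 by apply: val_inj.
- by have -> : Ordinal Hk = o2 by apply: val_inj.
- by have -> : Ordinal Hk = o3 by apply: val_inj.
Qed.

Lemma commw_ge n a a' b b' : gamma_eq n a a' -> gamma_eq n b b' -> commw n a b -> commw n a' b'.
Proof.
move=> Ha Hb H; rewrite /commw.
apply: ge_trans (ge_cat (ge_sym Ha) (ge_sym Hb)) _.
exact: ge_trans H (ge_cat Hb Ha).
Qed.

Lemma conj_cat n a b c : gamma_eq n ((c ++ a ++ winv c) ++ (c ++ b ++ winv c)) (c ++ (a ++ b) ++ winv c).
Proof.
have -> : (c ++ a ++ winv c) ++ (c ++ b ++ winv c) = (c ++ a) ++ (winv c ++ c) ++ (b ++ winv c) by rewrite !catA.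
apply: ge_trans (ge_cong _ _ (ge_cancel' n c)) _.
rewrite /= !catA; exact: ge_refl.
Qed.

Lemma commw_conj n a b c : commw n a b -> commw n (c ++ a ++ winv c) (c ++ b ++ winv c).
Proof.
move=> H; rewrite /commw.
apply: ge_trans (conj_cat _ _ _ _) _.
apply: ge_trans (ge_sym (conj_cat n b a c)).
exact: ge_cong.
Qed.

Lemma rel_i n i : (1 <= i < n)%N -> commw n (xw 0) (xw i).
Proof.
move=> Hi; apply: commw_rel; apply: ge_rel0.
rewrite /relators inE; apply/orP; right; apply/mapP; exists i.
  by rewrite mem_iota; lia.
by rewrite !wpow1l.
Qed.

Lemma rel_s n : commw n (y4 n) (xw 0).
Proof.
apply: commw_rel; apply: ge_rel0.
by rewrite /relators inE wpow1l eqxx.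
Qed.

Lemma conj_y4 n : gamma_eq n ([:: ls] ++ y4 n ++ winv [:: ls]) (y4 n).
Proof.
have -> : [:: ls] ++ y4 n ++ winv [:: ls] = y4 n ++ [:: ls; linv ls].
  by rewrite /y4 /=; elim: n => //= n ->.
by have := ge_free n (y4 n) [::] ls; rewrite !cats0.
Qed.

Lemma xw1E : xw 1 = [:: ls] ++ xw 0 ++ winv [:: ls]. Proof. by []. Qed.
Lemma xw2E : xw 2 = [:: ls] ++ xw 1 ++ winv [:: ls]. Proof. by []. Qed.

Lemma c12 n : (2 < n)%N -> commw n (xw 0) (xw 1).
Proof. by move=> Hn; apply: rel_i; lia. Qed.
Lemma c13 n : (2 < n)%N -> commw n (xw 0) (xw 2).
Proof. by move=> Hn; apply: rel_i; lia. Qed.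
Lemma c23 n : (2 < n)%N -> commw n (xw 1) (xw 2).
Proof. by move=> Hn; rewrite xw2E {1}xw1E; apply: commw_conj; apply: c12. Qed.
Lemma c14 n : commw n (xw 0) (y4 n).
Proof. by apply: commw_sym; apply: rel_s. Qed.
Lemma c24 n : commw n (xw 1) (y4 n).
Proof.
apply: (commw_ge (ge_refl _ _) (conj_y4 n)).
by rewrite xw1E; apply: commw_conj; apply: c14.
Qed.
Lemma c34 n : commw n (xw 2) (y4 n).
Proof.
apply: (commw_ge (ge_refl _ _) (conj_y4 n)).
by rewrite xw2E; apply: commw_conj; apply: c24.
Qed.

Lemma step n A B X Y : commw n B X -> gamma_eq n ((A ++ B) ++ (X ++ Y)) (A ++ X ++ (B ++ Y)).
Proof.
move=> H; rewrite -!catA; apply: ge_catl; rewrite !catA; exact: ge_catr H.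
Qed.

Lemma rearr n A1 A2 A3 A4 B1 B2 B3 B4 :
  commw n B1 (A2 ++ A3 ++ A4) -> commw n B2 (A3 ++ A4) -> commw n B3 A4 ->
  gamma_eq n ((A1 ++ B1) ++ (A2 ++ B2) ++ (A3 ++ B3) ++ (A4 ++ B4))
             ((A1 ++ A2 ++ A3 ++ A4) ++ (B1 ++ B2 ++ B3 ++ B4)).
Proof.
move=> H1 H2 H3.
have H3' := step A3 (B4) H3; rewrite -!catA in H3'.
have H2' := step A2 (B3 ++ B4) H2; rewrite -!catA in H2'.
have H1' := step A1 (B2 ++ B3 ++ B4) H1; rewrite -!catA in H1'.
rewrite -!catA.
apply: (@ge_trans _ _ (A1 ++ B1 ++ A2 ++ B2 ++ A3 ++ A4 ++ B3 ++ B4)).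
  by have := ge_catl (A1 ++ B1 ++ A2 ++ B2) H3'; rewrite -!catA.
apply: (@ge_trans _ _ (A1 ++ B1 ++ A2 ++ A3 ++ A4 ++ B2 ++ B3 ++ B4)).
  by have := ge_catl (A1 ++ B1) H2'; rewrite -!catA.
exact H1'.
Qed.

Lemma phi_hom n a b : (2 < n)%N -> gamma_eq n (phi n (a + b)) (phi n a ++ phi n b).
Proof.
move=> Hn; rewrite /phi !ffunE.
apply: ge_trans (ge_cat (zpowD _ _ _ _) (ge_cat (zpowD _ _ _ _) (ge_cat (zpowD _ _ _ _) (zpowD _ _ _ _)))) _.
apply: rearr.
- apply: commw_cat; first exact: commw_zpow2 (c12 Hn).
  apply: commw_cat; first exact: commw_zpow2 (c13 Hn).
  exact: commw_zpow2 (c14 n).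
- apply: commw_cat; first exact: commw_zpow2 (c23 Hn).
  exact: commw_zpow2 (c24 n).
- exact: commw_zpow2 (c34 n).
Qed.

Lemma phi0 n : phi n 0 = [::].
Proof. by rewrite /phi !ffunE. Qed.

Lemma phi_neg n a : (2 < n)%N -> gamma_eq n (phi n (- a)) (winv (phi n a)).
Proof.
move=> Hn.
apply: (@ge_trans _ _ ((phi n (- a) ++ phi n a) ++ winv (phi n a))).
  by rewrite -catA; have := ge_catl (phi n (- a)) (ge_cancel n (phi n a)); rewrite cats0 => H; apply: ge_sym.
apply: ge_trans (ge_catr _ (ge_sym (phi_hom _ _ Hn))) _.
rewrite addNr phi0; exact: ge_refl.
Qed.

Lemma gen_word_cat fs u v : gen_word fs u -> gen_word fs v -> gen_word fs (u ++ v).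
Proof.
move=> Hu Hv; elim: Hu => [|f w Hf _ IH|f w Hf _ IH] //=; rewrite -catA.
- exact: gw_pos.
- exact: gw_neg.
Qed.

Lemma gen_word_winv fs : forall w, gen_word fs w -> gen_word fs (winv w).
Proof.
move=> w; elim=> [|f w' Hf _ IH|f w' Hf _ IH]; first exact: gw_nil.
- rewrite winv_cat; apply: gen_word_cat IH _.
  by rewrite -[winv f]cats0; apply: gw_neg => //; apply: gw_nil.
- rewrite winv_cat winvK; apply: gen_word_cat IH _.
  by rewrite -[f]cats0; apply: gw_pos => //; apply: gw_nil.
Qed.

Lemma in_sub_ge n fs g h : in_subgroup n fs g -> gamma_eq n g h -> in_subgroup n fs h.
Proof. by case=> w [Hw Hg] H; exists w; split => //; apply: ge_trans (ge_sym H) Hg. Qed.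

Lemma in_sub_nil n fs : in_subgroup n fs [::].
Proof. by exists [::]; split; [apply: gw_nil | apply: ge_refl]. Qed.

Lemma in_sub_mem n fs f : f \in fs -> in_subgroup n fs f.
Proof.
move=> Hf; exists (f ++ [::]); rewrite cats0; split; last exact: ge_refl.
by rewrite -[f]cats0; apply: gw_pos => //; apply: gw_nil.
Qed.

Lemma in_sub_cat n fs u v : in_subgroup n fs u -> in_subgroup n fs v -> in_subgroup n fs (u ++ v).
Proof.
case=> w1 [H1 E1] [w2 [H2 E2]]; exists (w1 ++ w2); split; first exact: gen_word_cat.
exact: ge_cat.
Qed.

Lemma in_sub_winv n fs u : in_subgroup n fs u -> in_subgroup n fs (winv u).
Proof.
case=> w [H E]; exists (winv w); split; first exact: gen_word_winv.
exact: ge_winv.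
Qed.

Lemma in_sub_zpow n fs u z : in_subgroup n fs u -> in_subgroup n fs (zpow u z).
Proof.
have Hp : forall v k, in_subgroup n fs v -> in_subgroup n fs (wpow v k).
  by move=> v k Hv; elim: k => [|k IH]; [apply: in_sub_nil | rewrite wpowS; apply: in_sub_cat].
case: z => k H /=; apply: Hp => //; exact: in_sub_winv.
Qed.

Lemma in_sub_divr n fs f y z : in_subgroup n fs f -> in_subgroup n fs z ->
  gamma_eq n f (y ++ z) -> in_subgroup n fs y.
Proof.
move=> Hf Hz E.
apply: (@in_sub_ge _ _ (f ++ winv z)); first by apply: in_sub_cat => //; apply: in_sub_winv.
apply: ge_trans (ge_catr _ E) _.
by rewrite -catA; have := ge_catl y (ge_cancel n z); rewrite cats0.
Qed.

Lemma in_sub_divl n fs f y z : in_subgroup n fs f -> in_subgroup n fs y ->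
  gamma_eq n f (y ++ z) -> in_subgroup n fs z.
Proof.
move=> Hf Hy E.
apply: (@in_sub_ge _ _ (winv y ++ f)); first by apply: in_sub_cat => //; apply: in_sub_winv.
apply: ge_trans (ge_catl _ E) _.
by rewrite catA; have := ge_catr z (ge_cancel' n y).
Qed.

Lemma iso_gen n fs : (2 < n)%N ->
  (forall f, f \in fs -> exists e, gamma_eq n f (phi n e)) ->
  in_subgroup n fs (xw 0) -> in_subgroup n fs (xw 1) -> in_subgroup n fs (xw 2) ->
  in_subgroup n fs (y4 n) -> subgroup_iso_Z4 n fs.
Proof.
move=> Hn Hfs H1 H2 H3 H4; exists (phi n); split; first by move=> a b; apply: phi_hom.
split; first by move=> a b; apply: phi_inj.
move=> g; split.
- case=> w [Hw Hg].
  suff [a Ha] : exists a, gamma_eq n w (phi n a) by exists a; apply: ge_trans Hg Ha.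
  elim: Hw => [|f w' Hf _ [a Ha]|f w' Hf _ [a Ha]].
  + by exists 0; rewrite phi0; apply: ge_refl.
  + have [e He] := Hfs f Hf; exists (e + a).
    exact: ge_trans (ge_cat He Ha) (ge_sym (phi_hom _ _ Hn)).
  + have [e He] := Hfs f Hf; exists (- e + a).
    apply: ge_trans (ge_cat (ge_trans (ge_winv He) (ge_sym (phi_neg _ Hn))) Ha) _.
    exact: ge_sym (phi_hom _ _ Hn).
- case=> a Ha; apply: in_sub_ge (ge_sym Ha).
  rewrite /phi; apply: in_sub_cat; first exact: in_sub_zpow.
  apply: in_sub_cat; first exact: in_sub_zpow.
  by apply: in_sub_cat; apply: in_sub_zpow.
Qed.

Definition pw (W : seq (letter * nat)) : word := flatten [seq wpow [:: p.1] p.2 | p <- W].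

Lemma pos_pw n S W : W != [::] -> all (fun p => (p.1 \in S) && (0 < p.2)%N) W ->
  sorted (fun p q => p.1 != q.1) W -> positive_rep n S (pw W).
Proof. by move=> H1 H2 H3; exists W; do !split => //; apply: ge_refl. Qed.

Definition ev (c0 c1 c2 c3 : int) : Z4 := [ffun i : 'I_4 => nth 0 [:: c0; c1; c2; c3] i].

Lemma phi_ev n c0 c1 c2 c3 : phi n (ev c0 c1 c2 c3) =
  zpow (xw 0) c0 ++ zpow (xw 1) c1 ++ zpow (xw 2) c2 ++ zpow (y4 n) c3.
Proof. by rewrite /phi !ffunE. Qed.

Lemma zpow0 w : zpow w 0 = [::]. Proof. by []. Qed.
Lemma zpow1 w : zpow w 1 = w. Proof. exact: wpow1. Qed.
Lemma zpowm1 w : zpow w (Negz 0) = winv w. Proof. exact: wpow1. Qed.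

Lemma winv_y4 n : winv (y4 n) = nseq n lsi.
Proof. by rewrite /winv /y4 map_nseq rev_nseq. Qed.

Lemma R2 m : gamma_eq m.+2 (pw [:: (ls,1%N); (lx,1%N); (ls,m.+1)]) (xw 1 ++ y4 m.+2).
Proof.
rewrite /pw /= cats0 /y4 -/(wpow [:: ls] m) wpow1l.
exact: (ge_sym (ge_free m.+2 [:: ls; lx] (ls :: nseq m ls) lsi)).
Qed.

Lemma R3 m : gamma_eq m.+2 (pw [:: (ls,2%N); (lx,1%N); (ls,m)]) (xw 2 ++ y4 m.+2).
Proof.
rewrite /pw /= cats0 /y4 -/(wpow [:: ls] m) wpow1l.
apply: ge_sym.
apply: ge_trans (ge_free m.+2 [:: ls; ls; lx; lsi] (ls :: nseq m ls) lsi) _.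
exact: (ge_free m.+2 [:: ls; ls; lx] (nseq m ls) lsi).
Qed.

Lemma Rg3 m : gamma_eq m.+2 (pw [:: (ls,2%N); (lxi,1%N); (ls,m)]) (winv (xw 2) ++ y4 m.+2).
Proof.
rewrite /pw /= cats0 /y4 -/(wpow [:: ls] m) wpow1l.
apply: ge_sym.
apply: ge_trans (ge_free m.+2 [:: ls; ls; lxi; lsi] (ls :: nseq m ls) lsi) _.
exact: (ge_free m.+2 [:: ls; ls; lxi] (nseq m ls) lsi).
Qed.

Lemma Eg4 m : pw [:: (lxi,1%N); (lsi,m.+2)] = winv (xw 0) ++ winv (y4 m.+2).
Proof. by rewrite winv_y4 /pw /= cats0 -/(wpow [:: lsi] m) wpow1l. Qed.

Lemma E1 : pw [:: (lx,1%N)] = xw 0. Proof. by []. Qed.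
Lemma E4 m : pw [:: (ls,m.+2)] = y4 m.+2. Proof. by rewrite /pw /= cats0 -/(wpow [:: ls] m) wpow1l. Qed.

Theorem proposition1p5 (n : nat) : (12 <= n)%N ->
  exists f1 f2 f3 f4 g1 g2 g3 g4 : word,
    subgroup_iso_Z4 n [:: f1; f2; f3; f4] /\
    subgroup_iso_Z4 n [:: g1; g2; g3; g4] /\
    (positive_rep n S1 f1 /\ positive_rep n S1 f2 /\
     positive_rep n S1 f3 /\ positive_rep n S1 f4) /\
    (positive_rep n S1 g1 /\ positive_rep n S2 g2 /\
     positive_rep n S3 g3 /\ positive_rep n S4 g4).
Proof.
move=> Hn; have [m Em] : exists m, n = m.+2 by exists n.-2; lia.
subst n.
have Hm : (0 < m)%N by lia.
have Hn3 : (2 < m.+2)%N by lia.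
exists (pw [:: (lx,1%N)]), (pw [:: (ls,1%N); (lx,1%N); (ls,m.+1)]),
       (pw [:: (ls,2%N); (lx,1%N); (ls,m)]), (pw [:: (ls,m.+2)]).
exists (pw [:: (ls,1%N); (lx,1%N); (ls,m.+1)]), (pw [:: (lx,1%N)]),
       (pw [:: (ls,2%N); (lxi,1%N); (ls,m)]), (pw [:: (lxi,1%N); (lsi,m.+2)]).
split; [|split; [|split]].
- apply: iso_gen => //.
  + move=> f; rewrite !inE => /or4P [] /eqP ->.
    * by exists (ev 1 0 0 0); rewrite phi_ev zpow1 !zpow0 !cats0; apply: ge_refl.
    * by exists (ev 0 1 0 1); rewrite phi_ev zpow1 zpow1 !zpow0 /=; apply: R2.
    * by exists (ev 0 0 1 1); rewrite phi_ev zpow1 zpow1 !zpow0 /=; apply: R3.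
    * by exists (ev 0 0 0 1); rewrite phi_ev zpow1 !zpow0 /= E4; apply: ge_refl.
  + by rewrite -E1; apply: in_sub_mem; rewrite !inE eqxx.
  + apply: in_sub_divr (R2 m); first by apply: in_sub_mem; rewrite !inE eqxx ?orbT.
    by rewrite -E4; apply: in_sub_mem; rewrite !inE eqxx ?orbT.
  + apply: in_sub_divr (R3 m); first by apply: in_sub_mem; rewrite !inE eqxx ?orbT.
    by rewrite -E4; apply: in_sub_mem; rewrite !inE eqxx ?orbT.
  + by rewrite -E4; apply: in_sub_mem; rewrite !inE eqxx ?orbT.
- have Hy1 : in_subgroup m.+2 [:: pw [:: (ls,1%N); (lx,1%N); (ls,m.+1)]; pw [:: (lx,1%N)];
       pw [:: (ls,2%N); (lxi,1%N); (ls,m)]; pw [:: (lxi,1%N); (lsi,m.+2)]] (xw 0).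
    by rewrite -E1; apply: in_sub_mem; rewrite !inE eqxx ?orbT.
  have Hy4 : in_subgroup m.+2 [:: pw [:: (ls,1%N); (lx,1%N); (ls,m.+1)]; pw [:: (lx,1%N)];
       pw [:: (ls,2%N); (lxi,1%N); (ls,m)]; pw [:: (lxi,1%N); (lsi,m.+2)]] (y4 m.+2).
    rewrite -[y4 _]winvK; apply: in_sub_winv.
    apply: (@in_sub_divl _ _ (pw [:: (lxi,1%N); (lsi,m.+2)]) (winv (xw 0))); last by rewrite Eg4; apply: ge_refl.
      by apply: in_sub_mem; rewrite !inE eqxx ?orbT.
    exact: in_sub_winv.
  apply: iso_gen => //.
  + move=> f; rewrite !inE => /or4P [] /eqP ->.
    * by exists (ev 0 1 0 1); rewrite phi_ev zpow1 zpow1 !zpow0 /=; apply: R2.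
    * by exists (ev 1 0 0 0); rewrite phi_ev zpow1 !zpow0 !cats0; apply: ge_refl.
    * by exists (ev 0 0 (Negz 0) 1); rewrite phi_ev zpow1 zpowm1 !zpow0 /=; apply: Rg3.
    * by exists (ev (Negz 0) 0 0 (Negz 0)); rewrite phi_ev !zpowm1 !zpow0 /= Eg4; apply: ge_refl.
    apply: (in_sub_divr _ Hy4 (R2 m)).
    by apply: in_sub_mem; rewrite !inE eqxx ?orbT.
  + rewrite -[xw 2]winvK; apply: in_sub_winv.
    apply: (in_sub_divr _ Hy4 (Rg3 m)).
    by apply: in_sub_mem; rewrite !inE eqxx ?orbT.
- split; [|split; [|split]]; apply: pos_pw => //=; rewrite ?andbT //.
- split; [|split; [|split]]; apply: pos_pw => //=; rewrite ?andbT //.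
Qed.
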